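(* A binary network $N$ is orchard if and only if $N$ admits an HGT-consistent labelling.
   Context: A (directed phylogenetic) network on a finite taxa set $X$ is a directed acyclic graph without parallel arcs whose nodes are of the following types: a unique root (indegree 0, outdegree 1); tree nodes (indegree 1, outdegree at least 2); reticulations (indegree at least 2, outdegree 1); leaves (indegree 1, outdegree 0), the leaves being bijectively labelled by $X$. Non-leaf nodes are called internal. A network is binary if every tree node and every reticulation has total degree (indegree plus outdegree) exactly 3. A tree is a network without reticulations. Orchard networks: An ordered pair of leaves $(x,y)$ is a cherry if $x$ and $y$ have a common parent; it is a reticulated cherry if the parent $p_x$ of $x$ is a reticulation and $p_x$ and $y$ have a common parent. Let $p_x,p_y$ be the parents of $x,y$. Reducing $(x,y)$ in a network $N$: if $(x,y)$ is a cherry, delete $x$ and suppress $p_x$ if it now has indegree 1 and outdegree 1; if $(x,y)$ is a reticulated cherry, delete the arc $(p_y,p_x)$ and suppress any resulting node of indegree 1 and outdegree 1; otherwise do nothing. (Suppressing a node $v$ with one parent $u$ and one child $w$ means deleting $v$ and adding the arc $(u,w)$.) For a sequence $S$ of ordered pairs, $NS$ denotes the result of reducing the pairs of $S$ in order. $N$ is orchard if there is a sequence $S$ such that $NS$ is a tree with exactly one leaf. HGT-consistent labelling: Let $N$ be a binary network with node set $V$. An HGT-consistent labelling of $N$ is a map $t:V\to\mathbb{R}$ such that (1) for every arc $(u,v)$, $t(u)\le t(v)$, and equality is allowed only if $v$ is a reticulation; (2) every internal node $u$ has a child $v$ with $t(u)<t(v)$; (3) for every reticulation $r$ with parents $u$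 and $v$, exactly one of $t(u)=t(r)$ and $t(v)=t(r)$ holds. *)

(* Defs.v *)
From Stdlib Require Import Reals.
From mathcomp Require Import all_boot.

Set Implicit Arguments.
Unset Strict Implicit.
Unset Printing Implicit Defensive.

(* Networks are
   represented with nodes drawn from a fixed ambient finite type so that the
   cherry reductions (which delete nodes and add arcs between existing nodes)
   stay in the same type.  Leaves are identified with the taxa they carry
   (the labelling is a bijection, so this loses nothing). *)
Record digraph (T : finType) := Digraph { nodes : {set T}; arcs : {set T * T} }.

Section Net.
Variable T : finType.
Implicit Types (N : digraph T) (u v x y : T).

Definition arel N : rel T := fun u v => (u, v) \in arcs N.
Definition indeg N v := #|[set u | (u, v) \in arcs N]|.
Definition outdeg N v := #|[set w | (v, w) \in arcs N]|.

Definition is_root N v := [&& v \in nodes N, indeg N v == 0 & outdeg N v == 1].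
Definition is_tree_node N v := [&& v \in nodes N, indeg N v == 1 & 1 < outdeg N v].
Definition is_retic N v := [&& v \in nodes N, 1 < indeg N v & outdeg N v == 1].
Definition is_leaf N v := [&& v \in nodes N, indeg N v == 1 & outdeg N v == 0].
Definition is_internal N v := (v \in nodes N) && ~~ is_leaf N v.

Definition is_network N : Prop :=
  [/\ (forall u v, (u, v) \in arcs N -> (u \in nodes N) && (v \in nodes N)),
      (forall u v, (u, v) \in arcs N -> ~~ connect (arel N) v u) ,
      #|[set v | is_root N v]| = 1 &
      (forall v, v \in nodes N ->
         [|| is_root N v, is_tree_node N v, is_retic N v | is_leaf N v]) ].

Definition is_binary_network N : Prop :=
  is_network N /\
  (forall v, v \in nodes N ->
     (is_tree_node N v -> outdeg N v = 2) /\ (is_retic N v -> indeg N v = 2)).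

Definition is_tree N : Prop :=
  is_network N /\ (forall v, ~~ is_retic N v).

Definition nb_leaves N := #|[set v | is_leaf N v]|.

(* parent of a node (unique for leaves) *)
Definition parent N v : option T := [pick u | (u, v) \in arcs N].

Definition suppress N v : digraph T :=
  if [&& v \in nodes N, indeg N v == 1 & outdeg N v == 1] then
    match [pick u | (u, v) \in arcs N], [pick w | (v, w) \in arcs N] with
    | Some u, Some w =>
        Digraph (nodes N :\ v)
          ([set a in arcs N | (a.1 != v) && (a.2 != v)] :|: [set (u, w)])
    | _, _ => N
    end
  else N.

Definition delete_node N x : digraph T :=
  Digraph (nodes N :\ x) [set a in arcs N | (a.1 != x) && (a.2 != x)].

Definition delete_arc N (a : T * T) : digraph T :=
  Digraph (nodes N) (arcs N :\ a).

Definition is_cherry N x y : bool :=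
  [&& is_leaf N x, is_leaf N y, x != y &
      [exists p, ((p, x) \in arcs N) && ((p, y) \in arcs N)]].

Definition is_retic_cherry N x y : bool :=
  [&& is_leaf N x, is_leaf N y, x != y &
      [exists px, [&& (px, x) \in arcs N, is_retic N px &
         [exists q, ((q, px) \in arcs N) && ((q, y) \in arcs N)]]]].

Definition reduce N (xy : T * T) : digraph T :=
  let (x, y) := xy in
  match parent N x, parent N y with
  | Some px, Some py =>
      if is_cherry N x y then suppress (delete_node N x) px
      else if is_retic_cherry N x y then
        suppress (suppress (delete_arc N (py, px)) px) py
      else N
  | _, _ => N
  end.

Definition reduce_seq N (S : seq (T * T)) : digraph T := foldl reduce N S.

Definition orchard N : Prop :=
  exists S : seq (T * T), is_tree (reduce_seq N S) /\ nb_leaves (reduce_seq N S) = 1.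

Definition HGT_consistent N (t : T -> R) : Prop :=
  [/\ (forall u v, (u, v) \in arcs N ->
         Rle (t u) (t v) /\ (t u = t v -> is_retic N v)),
      (forall u, is_internal N u ->
         exists v, (u, v) \in arcs N /\ Rlt (t u) (t v)) &
      (forall r u v, is_retic N r -> (u, r) \in arcs N -> (v, r) \in arcs N ->
         u <> v -> (t u = t r <-> t v <> t r)) ].

End Net.

(* Main.v *)
Require Import Defs.
From Stdlib Require Import Reals.
From mathcomp Require Import all_boot.
From Stdlib Require Import Lra Classical.
From mathcomp Require Import zify.

Set Implicit Arguments.
Unset Strict Implicit.
Unset Printing Implicit Defensive.

Ltac neqs := repeat match goal with
 | H : is_true (?a != ?b) |- context [?a == ?b] => rewrite (negbTE H)
 | H : is_true (?a != ?b) |- context [?b == ?a] => rewrite [b == a]eq_sym (negbTE H)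
 end.
Ltac brute := repeat match goal with
 | |- context [ (?a, ?b) \in ?A ] => case: ((a, b) \in A)
 | |- context [ ?a == ?b ] => case: (a == b)
 end; try done.



Section Net2.
Variable T : finType.
Implicit Types (N : digraph T) (u v w x y z : T).

Definition par N z := [set u | (u, z) \in arcs N].
Definition chi N z := [set w | (z, w) \in arcs N].

Lemma inpar N u z : (u \in par N z) = ((u, z) \in arcs N).
Proof. by rewrite inE. Qed.
Lemma inchi N w z : (w \in chi N z) = ((z, w) \in arcs N).
Proof. by rewrite inE. Qed.

Definition LB N :=
  (forall u v, (u, v) \in arcs N -> (u \in nodes N) && (v \in nodes N)) /\
  (forall v, v \in nodes N ->
     [|| (indeg N v == 0) && (outdeg N v == 1),
         (indeg N v == 1) && (outdeg N v == 2),
         (indeg N v == 2) && (outdeg N v == 1) |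
         (indeg N v == 1) && (outdeg N v == 0)]).

Lemma set1_of_card1 (A : {set T}) a : #|A| = 1 -> a \in A -> A = [set a].
Proof.
move=> /eqP /cards1P [b ->]; rewrite inE => /eqP ->; done.
Qed.

Lemma set2_of_card2 (A : {set T}) a b :
  #|A| = 2 -> a \in A -> b \in A -> a != b -> A = [set a; b].
Proof.
move=> cA aA bA ab; apply/eqP; rewrite eq_sym eqEcard cA cards2 ab leqnn andbT.
by apply/subsetP => c; rewrite !inE => /orP [] /eqP ->.
Qed.

Lemma pick_set1 (P : pred T) a : [set u | P u] = [set a] -> [pick u | P u] = Some a.
Proof.
move=> H; case: pickP => [b Pb|].
  by have := H; move/setP/(_ b); rewrite !inE Pb => /esym /eqP ->.
by move=> /(_ a); have := H; move/setP/(_ a); rewrite !inE eqxx => ->.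
Qed.

Lemma card_swap (A : {set T}) a b : a \in A -> b \notin A -> #|b |: (A :\ a)| = #|A|.
Proof.
move=> aA bA; rewrite cardsU1 (cardsD1 a A) aA !inE.
by rewrite (negbTE bA) andbF.
Qed.

Lemma par_card N z : indeg N z = #|par N z|. Proof. by []. Qed.
Lemma chi_card N z : outdeg N z = #|chi N z|. Proof. by []. Qed.


Lemma parE N z a : par N z = [set a] -> forall u, ((u, z) \in arcs N) = (u == a).
Proof. by move=> H u; rewrite -inpar H inE. Qed.
Lemma chiE N z a : chi N z = [set a] -> forall w, ((z, w) \in arcs N) = (w == a).
Proof. by move=> H w; rewrite -inchi H inE. Qed.
Lemma par2E N z a b : par N z = [set a; b] -> forall u, ((u, z) \in arcs N) = (u == a) || (u == b).
Proof. by move=> H u; rewrite -inpar H !inE. Qed.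
Lemma chi2E N z a b : chi N z = [set a; b] -> forall w, ((z, w) \in arcs N) = (w == a) || (w == b).
Proof. by move=> H w; rewrite -inchi H !inE. Qed.
Lemma chi0E N z : chi N z = set0 -> forall w, ((z, w) \in arcs N) = false.
Proof. by move=> H w; rewrite -inchi H inE. Qed.

Lemma suppressE G v u w : v \in nodes G -> par G v = [set u] -> chi G v = [set w] ->
  suppress G v = Digraph (nodes G :\ v)
     ([set a in arcs G | (a.1 != v) && (a.2 != v)] :|: [set (u, w)]).
Proof.
move=> vG Hp Hc; rewrite /suppress vG.
have -> : indeg G v = 1 by rewrite par_card Hp cards1.
have -> : outdeg G v = 1 by rewrite chi_card Hc cards1.
by rewrite (pick_set1 Hp) (pick_set1 Hc).
Qed.

Lemma leafE N x : is_leaf N x -> [/\ x \in nodes N, #|par N x| = 1 & chi N x = set0].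
Proof.
case/and3P => xN /eqP H1 /eqP H0; split => //.
by apply/eqP; rewrite -cards_eq0 -chi_card H0.
Qed.

Lemma LB_out2 N v : LB N -> v \in nodes N -> 2 <= outdeg N v ->
  indeg N v = 1 /\ outdeg N v = 2.
Proof.
move=> [_ H] /H; case/or4P => /andP [/eqP E1 /eqP E2]; rewrite ?E1 ?E2 // ; move=> *; lia.
Qed.

Lemma LB_in2 N v : LB N -> v \in nodes N -> 2 <= indeg N v ->
  indeg N v = 2 /\ outdeg N v = 1.
Proof.
move=> [_ H] /H; case/or4P => /andP [/eqP E1 /eqP E2]; rewrite ?E1 ?E2 // ; move=> *; lia.
Qed.

Lemma LB_outle N v : LB N -> v \in nodes N -> outdeg N v <= 2.
Proof. move=> [_ H] /H; case/or4P => /andP [/eqP E1 /eqP E2]; rewrite ?E1 ?E2 // ; move=> *; lia. Qed.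

Lemma LB_inle N v : LB N -> v \in nodes N -> indeg N v <= 2.
Proof. move=> [_ H] /H; case/or4P => /andP [/eqP E1 /eqP E2]; rewrite ?E1 ?E2 // ; move=> *; lia. Qed.

Lemma LB_in0 N v : LB N -> v \in nodes N -> indeg N v = 0 -> outdeg N v = 1.
Proof. move=> [_ H] /H; case/or4P => /andP [/eqP E1 /eqP E2]; rewrite ?E1 ?E2 // ; move=> *; lia. Qed.

Lemma parent_set1 N x p : par N x = [set p] -> parent N x = Some p.
Proof. by move=> H; rewrite /parent (pick_set1 H). Qed.

End Net2.




Section Red.
Variable T : finType.
Implicit Types (N : digraph T) (u v w x y z : T).

Lemma cherry_red N x y : LB N -> is_cherry N x y ->
 exists p g,
  [/\ [/\ par N x = [set p], par N y = [set p], chi N p = [set x; y] & par N p = [set g]],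
      [/\ chi N x = set0 & chi N y = set0] &
      [/\ x != y, x \in nodes N, y \in nodes N, p \in nodes N &
      reduce N (x, y) = Digraph (nodes N :\ x :\ p)
        ([set a in [set a in arcs N | (a.1 != x) && (a.2 != x)] | (a.1 != p) && (a.2 != p)]
           :|: [set (g, y)])]].
Proof.
move=> HLB Hc; have := Hc; case/and4P => lx ly xy /existsP [p /andP [px py]].
case: (leafE lx) => xN cx chx; case: (leafE ly) => yN cy chy.
have Hpx : par N x = [set p] by apply: set1_of_card1 cx _; rewrite inpar.
have Hpy : par N y = [set p] by apply: set1_of_card1 cy _; rewrite inpar.
have pN : p \in nodes N by case/andP: (HLB.1 _ _ px).
have sub : [set x; y] \subset chi N p.
  by apply/subsetP => c; rewrite !inE => /orP [] /eqP ->.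
have o2 : 2 <= outdeg N p.
  by rewrite chi_card; move: (subset_leq_card sub); rewrite cards2 xy.
case: (LB_out2 HLB pN o2) => ip op.
have Hcp : chi N p = [set x; y] by apply: set2_of_card2 => //; rewrite ?inchi -?chi_card.
have : #|par N p| == 1 by rewrite -par_card ip.
case/cards1P => g Hg.
exists p, g; split => //; split => //.
have gx : g != x.
  by apply/eqP => E; have := chi0E chx p; rewrite -E (parE Hg) eqxx.
have px' : p != x.
  by apply/eqP => E; have := chi0E chx x; rewrite -{1}E px.
rewrite /reduce (parent_set1 Hpx) (parent_set1 Hpy) Hc.
apply: suppressE.
- by rewrite /= !inE pN andbT.
- apply/setP => u; rewrite !inE /= (parE Hg).
  case: (u =P g) => [->|] //=; by rewrite gx px'.
- apply/setP => w; rewrite !inE /= (chi2E Hcp) px' /=.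
  case: (w =P x) => [->|] //=; first by rewrite (negbTE xy).
  by rewrite andbT.
Qed.


Lemma cherry_red2 N x y : LB N -> is_cherry N x y ->
 exists p g,
  [/\ [/\ par N x = [set p], par N y = [set p], chi N p = [set x; y] & par N p = [set g]],
      [/\ chi N x = set0 & chi N y = set0],
      [/\ x != y, x \in nodes N, y \in nodes N & p \in nodes N],
      (forall z, (z \in nodes (reduce N (x, y))) = [&& z \in nodes N, z != x & z != p]) &
      (forall u v, ((u, v) \in arcs (reduce N (x, y))) =
         [&& (u, v) \in arcs N, u != x, v != x, u != p & v != p] || ((u == g) && (v == y)))].
Proof.
move=> HLB Hc; case: (cherry_red HLB Hc) => p [g [A B [xy xN yN pN E]]].
exists p, g; split => //; rewrite E.
- by move=> z; rewrite /= !inE; case: (z \in nodes N); case: (z != x); case: (z != p).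
- by move=> u v; rewrite /= !inE /= xpair_eqE -!andbA.
Qed.


Lemma retic_red N x y : LB N -> is_retic_cherry N x y ->
 exists px py q g,
  [/\ [/\ par N x = [set px], par N y = [set py], chi N px = [set x],
          par N px = [set py; q] & chi N py = [set px; y]],
      [/\ par N py = [set g], chi N x = set0, chi N y = set0 & q != py],
      [/\ x != y, x \in nodes N, y \in nodes N, px \in nodes N & py \in nodes N],
      [/\ [/\ px != x, px != y, py != x, py != y & px != py],
          [/\ q != px, q != x, q != y, g != py & g != px], g != x & g != y] &
      reduce N (x, y) = suppress (suppress (delete_arc N (py, px)) px) py ].
Proof.
move=> HLB Hrc; have := Hrc.
case/and4P => lx ly xy /existsP [px /and3P [pxx rpx /existsP [py /andP [pypx pyy]]]].
case: (leafE lx) => xN cx chx; case: (leafE ly) => yN cy chy.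
have Hpx : par N x = [set px] by apply: set1_of_card1 cx _; rewrite inpar.
have Hpy : par N y = [set py] by apply: set1_of_card1 cy _; rewrite inpar.
case/and3P: rpx => pxN ipx /eqP opx.
have Hcpx : chi N px = [set x] by apply: set1_of_card1; rewrite -?chi_card ?inchi.
case: (LB_in2 HLB pxN ipx) => ipx2 _.
have [q [qpy Hppx]] : exists q, q != py /\ par N px = [set py; q].
  have : #|par N px| == 2 by rewrite -par_card ipx2.
  case/cards2P => a [b [ab E]].
  have : py \in par N px by rewrite inpar.
  rewrite E !inE => /orP [] /eqP ->.
    by exists b; rewrite eq_sym.
  by exists a; split => //; rewrite setUC.
have pyN : py \in nodes N by case/andP: (HLB.1 _ _ pyy).
have pxy : px != y by apply/eqP => E; move: (chi0E chy x); rewrite -E pxx.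
have sub : [set px; y] \subset chi N py.
  by apply/subsetP => c; rewrite !inE => /orP [] /eqP ->.
have o2 : 2 <= outdeg N py.
  by rewrite chi_card; move: (subset_leq_card sub); rewrite cards2 pxy.
case: (LB_out2 HLB pyN o2) => ipy opy.
have Hcpy : chi N py = [set px; y] by apply: set2_of_card2 => //; rewrite ?inchi -?chi_card.
have : #|par N py| == 1 by rewrite -par_card ipy.
case/cards1P => g Hg.
have pxpy : px != py.
  apply/eqP => E; move: (congr1 (fun A : {set T} => #|A|) Hcpy).
  by rewrite -E Hcpx cards1 cards2 pxy.
have pxx' : px != x by apply/eqP => E; move: (chi0E chx x); rewrite -{1}E pxx.
have pyx : py != x by apply/eqP => E; move: (chi0E chx y); rewrite -E pyy.
have pyy' : py != y by apply/eqP => E; move: (chi0E chy y); rewrite -{1}E pyy.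
have qpx : q != px.
  apply/eqP => E; have : (q, px) \in arcs N by rewrite (par2E Hppx) eqxx orbT.
  by rewrite E (chiE Hcpx) (negbTE pxx').
have qx : q != x.
  apply/eqP => E; have : (q, px) \in arcs N by rewrite (par2E Hppx) eqxx orbT.
  by rewrite E (chi0E chx).
have qy : q != y.
  apply/eqP => E; have : (q, px) \in arcs N by rewrite (par2E Hppx) eqxx orbT.
  by rewrite E (chi0E chy).
have gpy : g != py.
  apply/eqP => E; have : (g, py) \in arcs N by rewrite (parE Hg).
  by rewrite {1}E (chi2E Hcpy) eq_sym (negbTE pxpy) (negbTE pyy').
have gpx : g != px.
  apply/eqP => E; have : (g, py) \in arcs N by rewrite (parE Hg).
  by rewrite E (chiE Hcpx) (negbTE pyx).
have gx : g != x.
  apply/eqP => E; have : (g, py) \in arcs N by rewrite (parE Hg).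
  by rewrite E (chi0E chx).
have gy : g != y.
  apply/eqP => E; have : (g, py) \in arcs N by rewrite (parE Hg).
  by rewrite E (chi0E chy).
exists px, py, q, g; split => //.
have nc : is_cherry N x y = false.
  apply/negbTE/negP; case/and4P => _ _ _ /existsP [p /andP [p1 p2]].
  move: p1 p2; rewrite (parE Hpx) (parE Hpy) => /eqP -> /eqP E.
  by rewrite E eqxx in pxpy.
by rewrite /reduce (parent_set1 Hpx) (parent_set1 Hpy) nc Hrc.
Qed.


Lemma retic_red2 N x y : LB N -> is_retic_cherry N x y ->
 exists px py q g,
  [/\ [/\ par N x = [set px], par N y = [set py], chi N px = [set x],
          par N px = [set py; q] & chi N py = [set px; y]],
      [/\ par N py = [set g], chi N x = set0, chi N y = set0 & q != py],
      [/\ x != y, x \in nodes N, y \in nodes N, px \in nodes N & py \in nodes N],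
      [/\ [/\ px != x, px != y, py != x, py != y & px != py],
          [/\ q != px, q != x, q != y, g != py & g != px], g != x & g != y] &
      [/\ (forall z, (z \in nodes (reduce N (x, y))) = [&& z \in nodes N, z != px & z != py]) &
      (forall u v, ((u, v) \in arcs (reduce N (x, y))) =
         [|| [&& (u, v) \in arcs N, u != px, u != py, v != px & v != py],
             ((u == q) && (v == x)) | ((u == g) && (v == y))])]].
Proof.
move=> HLB Hrc; case: (retic_red HLB Hrc) => px [py [q [g [A B C D E]]]].
case: A => Hpx Hpy Hcpx Hppx Hcpy; case: B => Hg chx chy qpy.
case: C => xy xN yN pxN pyN.
case: D => [[pxx pxy pyx pyy pxpy] [qpx qx qy gpy gpx] gx gy].
exists px, py, q, g; split => //.
have E1 : suppress (delete_arc N (py, px)) px =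
   Digraph (nodes N :\ px)
     ([set a in arcs N :\ (py, px) | (a.1 != px) && (a.2 != px)] :|: [set (q, x)]).
  apply: suppressE => //.
  - apply/setP => u; rewrite !inE /= xpair_eqE (par2E Hppx).
    case: (u =P py) => [->|] //=; by rewrite eqxx eq_sym (negbTE qpy).
  - apply/setP => w; rewrite !inE /= xpair_eqE (chiE Hcpx) (negbTE pxpy) /=.
    done.
rewrite E E1 (@suppressE _ _ py g y) //=.
- split.
  + by move=> z; rewrite !inE; case: (z \in nodes N); case: (z != px); case: (z != py).
  + move=> u v; rewrite !inE /= !xpair_eqE.
    case: (u =P py) => [->|/eqP nu]; try (case: (u =P px) => [->|/eqP nu']);
    case: (v =P py) => [->|/eqP nv]; try (case: (v =P px) => [->|/eqP nv']);
    rewrite ?eqxx; neqs; brute.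
- by rewrite !inE pyN andbT; neqs.
- apply/setP => u; rewrite !inE /= !xpair_eqE (parE Hg).
  case: (u =P g) => [->|/eqP nu]; rewrite ?eqxx; neqs; brute.
- apply/setP => w; rewrite !inE /= !xpair_eqE (chi2E Hcpy).
  case: (w =P y) => [->|/eqP nw]; rewrite ?eqxx; neqs; brute.
Qed.

End Red.




Section Tr.
Variable T : finType.
Implicit Types (N : digraph T) (u v w x y z : T).

Lemma transfer N N' : LB N ->
  (forall z, z \in nodes N' -> z \in nodes N) ->
  (forall z, z \in nodes N' -> indeg N' z = indeg N z /\ outdeg N' z = outdeg N z) ->
  (forall u v, (u, v) \in arcs N' -> (u \in nodes N') && (v \in nodes N')) ->
  (forall z, z \in nodes N -> z \notin nodes N' -> indeg N z != 0) ->
  [/\ LB N', [set v | is_root N' v] = [set v | is_root N v] &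
     forall z, z \in nodes N' ->
       [/\ is_leaf N' z = is_leaf N z, is_retic N' z = is_retic N z,
           is_internal N' z = is_internal N z & is_root N' z = is_root N z]].
Proof.
move=> [LB1 LB2] Hn Hd Ha Hr.
have St : forall z, z \in nodes N' ->
       [/\ is_leaf N' z = is_leaf N z, is_retic N' z = is_retic N z,
           is_internal N' z = is_internal N z & is_root N' z = is_root N z].
  move=> z zN'; have zN := Hn _ zN'; case: (Hd _ zN') => E1 E2.
  by rewrite /is_internal /is_leaf /is_retic /is_root zN zN' E1 E2.
split => //.
- split => // v vN'; case: (Hd _ vN') => -> ->; exact: LB2 (Hn _ vN').
- apply/setP => v; rewrite !inE.
  case: (boolP (v \in nodes N')) => vN'; first by case: (St _ vN').
  rewrite /is_root (negbTE vN') /=.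
  case: (boolP (v \in nodes N)) => vN //=.
  by rewrite (negbTE (Hr _ vN vN')).
Qed.


Lemma cherry_full N x y : LB N -> is_cherry N x y ->
 exists p g,
  [/\ [/\ par N x = [set p], par N y = [set p], chi N p = [set x; y] & par N p = [set g]],
      [/\ chi N x = set0 & chi N y = set0],
      [/\ [/\ x != y, p != x, p != y & g != p], g != x & g != y],
      [/\ x \in nodes N, y \in nodes N & p \in nodes N] &
      [/\ (forall z, (z \in nodes (reduce N (x, y))) = [&& z \in nodes N, z != x & z != p]),
          (forall u v, ((u, v) \in arcs (reduce N (x, y))) =
            [&& (u, v) \in arcs N, u != x, v != x, u != p & v != p] || ((u == g) && (v == y))),
          LB (reduce N (x, y)),
          [set v | is_root (reduce N (x, y)) v] = [set v | is_root N v] &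
          forall z, z \in nodes (reduce N (x, y)) ->
          [/\ is_leaf (reduce N (x, y)) z = is_leaf N z, is_retic (reduce N (x, y)) z = is_retic N z,
              is_internal (reduce N (x, y)) z = is_internal N z &
              is_root (reduce N (x, y)) z = is_root N z]]].
Proof.
move=> HLB Hc; case: (cherry_red2 HLB Hc) => p [g [[Hpx Hpy Hcp Hg] [chx chy] [xy xN yN pN] En Ea]].
set N' := reduce N (x, y) in En Ea *.
have px : p != x by apply/eqP => E; move: (chi0E chx x); rewrite -{1}E (parE Hpx) eqxx.
have py : p != y by apply/eqP => E; move: (chi0E chy y); rewrite -{1}E (parE Hpy) eqxx.
have gp : g != p.
  apply/eqP => E; move: (parE Hg g); rewrite eqxx {1}E (chi2E Hcp).
  by rewrite (negbTE px) (negbTE py).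
have gx : g != x by apply/eqP => E; move: (parE Hg g); rewrite eqxx {1}E (chi0E chx).
have gy : g != y by apply/eqP => E; move: (parE Hg g); rewrite eqxx {1}E (chi0E chy).
exists p, g; split => //.
have Hn : forall z, z \in nodes N' -> z \in nodes N by move=> z; rewrite En => /and3P [].
have [HL HR HS] : [/\ LB N', [set v | is_root N' v] = [set v | is_root N v] &
     forall z, z \in nodes N' ->
       [/\ is_leaf N' z = is_leaf N z, is_retic N' z = is_retic N z,
           is_internal N' z = is_internal N z & is_root N' z = is_root N z]].
  apply: transfer => //.
  - move=> z; rewrite En => /and3P [zN zx zp]; split.
    + rewrite !par_card; case: (z =P y) => [->|/eqP zy].
        rewrite Hpy cards1; apply/eqP/cards1P; exists g; apply/setP => u.
        rewrite !inE Ea (parE Hpy); case: (u =P p) => [->|/eqP up]; rewrite ?eqxx; neqs; brute.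
      apply: eq_card => u; rewrite !inE Ea.
      case: (u =P x) => [->|/eqP ux]; first by rewrite (chi0E chx); neqs.
      case: (u =P p) => [->|/eqP up]; first by rewrite (chi2E Hcp); neqs; rewrite ?andbF.
      rewrite ?eqxx; neqs; brute.
    + rewrite !chi_card; case: (z =P g) => [->|/eqP zg].
        rewrite -(@card_swap _ (chi N g) p y); last first.
        * by rewrite inchi (parE Hpy); neqs.
        * by rewrite inchi (parE Hg).
        apply: eq_card => w; rewrite !inE Ea eqxx.
        case: (w =P y) => [->|/eqP wy]; rewrite ?eqxx ?orbT ?orTb //; neqs.
        case: (w =P p) => [->|/eqP wp]; rewrite ?eqxx; neqs; first brute.
        case: (w =P x) => [->|/eqP wx]; rewrite ?(parE Hpx) ?eqxx; neqs; brute.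
      apply: eq_card => w; rewrite !inE Ea.
      case: (w =P x) => [->|/eqP wx]; first by rewrite (parE Hpx); neqs; rewrite ?andbF.
      case: (w =P p) => [->|/eqP wp]; first by rewrite (parE Hg); neqs; rewrite ?andbF.
      rewrite ?eqxx; neqs; brute.
  - move=> u v; rewrite Ea !En; case/orP.
      by case/and5P => a ux vx up vp; case/andP: (HLB.1 _ _ a) => -> ->; rewrite ux vx up vp.
    case/andP => /eqP -> /eqP ->; rewrite yN; neqs.
    have gpa : (g, p) \in arcs N by rewrite (parE Hg).
    by case/andP: (HLB.1 _ _ gpa) => ->.
  - move=> z zN; rewrite En zN /=; case: (z =P x) => [->|/eqP zx].
      by rewrite par_card Hpx cards1.
    rewrite /= => /negPn /eqP ->.
    by rewrite par_card Hg cards1.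
by split.
Qed.


Lemma retic_full N x y : LB N -> is_retic_cherry N x y ->
 exists px py q g,
  [/\ [/\ par N x = [set px], par N y = [set py], chi N px = [set x],
          par N px = [set py; q] & chi N py = [set px; y]],
      [/\ par N py = [set g], chi N x = set0, chi N y = set0 & q != py],
      [/\ x != y, x \in nodes N, y \in nodes N, px \in nodes N & py \in nodes N],
      [/\ [/\ px != x, px != y, py != x, py != y & px != py],
          [/\ q != px, q != x, q != y, g != py & g != px], g != x & g != y] &
      [/\ (forall z, (z \in nodes (reduce N (x, y))) = [&& z \in nodes N, z != px & z != py]),
      (forall u v, ((u, v) \in arcs (reduce N (x, y))) =
         [|| [&& (u, v) \in arcs N, u != px, u != py, v != px & v != py],
             ((u == q) && (v == x)) | ((u == g) && (v == y))]),
          LB (reduce N (x, y)),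
          [set v | is_root (reduce N (x, y)) v] = [set v | is_root N v] &
          forall z, z \in nodes (reduce N (x, y)) ->
          [/\ is_leaf (reduce N (x, y)) z = is_leaf N z, is_retic (reduce N (x, y)) z = is_retic N z,
              is_internal (reduce N (x, y)) z = is_internal N z &
              is_root (reduce N (x, y)) z = is_root N z]]].
Proof.
move=> HLB Hrc; case: (retic_red2 HLB Hrc) => px [py [q [g [A B C D [En Ea]]]]].
case: (A) => Hpx Hpy Hcpx Hppx Hcpy; case: (B) => Hg chx chy qpy.
case: (C) => xy xN yN pxN pyN.
case: (D) => [[pxx pxy pyx pyy pxpy] [qpx qx qy gpy gpx] gx gy].
exists px, py, q, g; split => //.
set N' := reduce N (x, y) in En Ea *.
have qpxa : (q, px) \in arcs N by rewrite (par2E Hppx) eqxx orbT.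
have gpya : (g, py) \in arcs N by rewrite (parE Hg).
have qN : q \in nodes N by case/andP: (HLB.1 _ _ qpxa).
have gN : g \in nodes N by case/andP: (HLB.1 _ _ gpya).
have Hn : forall z, z \in nodes N' -> z \in nodes N by move=> z; rewrite En => /and3P [].
have [HL HR HS] : [/\ LB N', [set v | is_root N' v] = [set v | is_root N v] &
     forall z, z \in nodes N' ->
       [/\ is_leaf N' z = is_leaf N z, is_retic N' z = is_retic N z,
           is_internal N' z = is_internal N z & is_root N' z = is_root N z]].
  apply: transfer => //.
  - move=> z; rewrite En => /and3P [zN zx zp]; split.
    + rewrite !par_card; case: (z =P x) => [->|/eqP zx'].
        rewrite Hpx cards1; apply/eqP/cards1P; exists q; apply/setP => u.
        rewrite !inE Ea (parE Hpx); case: (u =P px) => [->|/eqP up]; rewrite ?eqxx; neqs; brute.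
      case: (z =P y) => [->|/eqP zy'].
        rewrite Hpy cards1; apply/eqP/cards1P; exists g; apply/setP => u.
        rewrite !inE Ea (parE Hpy); case: (u =P py) => [->|/eqP up]; rewrite ?eqxx; neqs; brute.
      apply: eq_card => u; rewrite !inE Ea.
      case: (u =P px) => [->|/eqP up]; first by rewrite (chiE Hcpx); neqs; rewrite ?andbF.
      case: (u =P py) => [->|/eqP up']; first by rewrite (chi2E Hcpy); neqs; rewrite ?andbF.
      rewrite ?eqxx; neqs; brute.
    + rewrite !chi_card.
      have Hgen : forall w, w != x -> w != y -> w != px -> w != py ->
                  ((z, w) \in arcs N') = ((z, w) \in arcs N).
        by move=> w wx wy wpx wpy; rewrite Ea; neqs; brute.
      case: (z =P g) => [Ezg|/eqP zg]; case: (z =P q) => [Ezq|/eqP zq].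
      * have sub : [set px; py] \subset chi N z.
          apply/subsetP => w; rewrite !inE => /orP [] /eqP ->; [by rewrite Ezq | by rewrite Ezg].
        have c2 : #|chi N z| = 2.
          apply/eqP; rewrite eqn_leq -chi_card LB_outle //=.
          by move: (subset_leq_card sub); rewrite cards2 pxpy chi_card.
        have E2 := set2_of_card2 c2 (subsetP sub _ (set21 _ _)) (subsetP sub _ (set22 _ _)) pxpy.
        rewrite c2; apply/eqP/cards2P; exists x, y; split => //; apply/setP => w.
        rewrite !inE Ea (chi2E E2) -{1}Ezq -Ezg !eqxx /=.
        case: (w =P x) => [->|/eqP wx]; rewrite ?orbT //; neqs.
        case: (w =P y) => [->|/eqP wy]; rewrite ?orbT //; neqs.
        by case: (w == px); case: (w == py).
      * subst z.
        rewrite -(@card_swap _ (chi N g) py y); last first.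
        - by rewrite inchi (parE Hpy); neqs.
        - by rewrite inchi (parE Hg).
        apply: eq_card => w; rewrite !inE Ea eqxx; neqs.
        case: (w =P y) => [->|/eqP wy]; rewrite ?eqxx ?orbT ?orTb //; neqs.
        case: (w =P py) => [->|/eqP wp]; rewrite ?eqxx; neqs; first brute.
        case: (w =P x) => [->|/eqP wx]; rewrite ?(parE Hpx) ?eqxx; neqs; first brute.
        case: (w =P px) => [->|/eqP wpx]; rewrite ?(par2E Hppx) ?eqxx; neqs; brute.
      * subst z.
        rewrite -(@card_swap _ (chi N q) px x); last first.
        - by rewrite inchi (parE Hpx); neqs.
        - by rewrite inchi.
        apply: eq_card => w; rewrite !inE Ea eqxx; neqs.
        case: (w =P x) => [->|/eqP wx]; rewrite ?eqxx ?orbT ?orTb //; neqs.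
        case: (w =P px) => [->|/eqP wp]; rewrite ?eqxx; neqs; first brute.
        case: (w =P y) => [->|/eqP wy]; rewrite ?(parE Hpy) ?eqxx; neqs; first brute.
        case: (w =P py) => [->|/eqP wpy]; rewrite ?(parE Hg) ?eqxx; neqs; brute.
      * apply: eq_card => w; rewrite !inE.
        case: (w =P x) => [->|/eqP wx]; first by rewrite Ea (parE Hpx); neqs; brute.
        case: (w =P y) => [->|/eqP wy]; first by rewrite Ea (parE Hpy); neqs; brute.
        case: (w =P px) => [->|/eqP wpx]; first by rewrite Ea (par2E Hppx); neqs; brute.
        case: (w =P py) => [->|/eqP wpy]; first by rewrite Ea (parE Hg); neqs; brute.
        exact: Hgen.
  - move=> u v; rewrite Ea !En; case/or3P.
    + by case/and5P => a ux uy vx vy; case/andP: (HLB.1 _ _ a) => -> ->; rewrite ux uy vx vy.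
    + by case/andP => /eqP -> /eqP ->; rewrite qN xN; neqs.
    + by case/andP => /eqP -> /eqP ->; rewrite gN yN; neqs.
  - move=> z zN; rewrite En zN /=; case: (z =P px) => [->|/eqP zx].
      by rewrite par_card Hppx cards2; neqs.
    rewrite /= => /negPn /eqP ->.
    by rewrite par_card Hg cards1.
by split.
Qed.

End Tr.




Section Lift.
Local Open Scope R_scope.
Variable T : finType.
Implicit Types (N : digraph T) (u v w x y z : T).

Lemma retic_chi0 N r : is_retic N r -> chi N r = set0 -> False.
Proof. by case/and3P => _ _ /eqP; rewrite chi_card => E H; rewrite H cards0 in E. Qed.

Lemma retic_chi2 N r a b : is_retic N r -> chi N r = [set a; b] -> a != b -> False.
Proof. by case/and3P => _ _ /eqP; rewrite chi_card => E H ab; rewrite H cards2 ab in E. Qed.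


Lemma lift_cherry N x y (t' : T -> R) : LB N -> is_cherry N x y ->
  HGT_consistent (reduce N (x, y)) t' -> exists t, HGT_consistent N t.
Proof.
move=> HLB Hc; have := Hc; case/and4P => lx ly _ _.
case: (cherry_full HLB Hc) => p [g [[Hpx Hpy Hcp Hg] [chx chy] [[xy px py gp] gx gy]
   [xN yN pN] [En Ea HL HR HS]]].
set N' := reduce N (x, y) in En Ea HL HR HS *.
case=> H1 H2 H3.
pose t z := if z == p then (t' g + 1) else if (z == x) || (z == y) then (t' g + 2) else t' z.
have tp : t p = (t' g + 1) by rewrite /t eqxx.
have tx : t x = (t' g + 2) by rewrite /t eqxx orTb; neqs.
have ty : t y = (t' g + 2) by rewrite /t eqxx orbT; neqs.
have to : forall z, z != p -> z != x -> z != y -> t z = t' z.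
  by move=> z zp zx zy; rewrite /t; neqs.
have tg : t g = t' g by apply: to.
have nret : forall z, is_retic N z -> [/\ z != x, z != y & z != p].
  move=> z rz; split; apply/eqP => E; rewrite E in rz.
  - exact: retic_chi0 rz chx.
  - exact: retic_chi0 rz chy.
  - exact: retic_chi2 rz Hcp xy.
exists t; split.
- move=> u v a.
  case: (v =P x) => [Ev|/eqP vx].
    subst v; move: a; rewrite (parE Hpx) => /eqP ->; rewrite tp tx; split; lra.
  case: (v =P y) => [Ev|/eqP vy].
    subst v; move: a; rewrite (parE Hpy) => /eqP ->; rewrite tp ty; split; lra.
  case: (v =P p) => [Ev|/eqP vp].
    subst v; move: a; rewrite (parE Hg) => /eqP ->; rewrite tp tg; split; lra.
  have ux : u != x by apply/eqP => E; move: a; rewrite E (chi0E chx).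
  have uy : u != y by apply/eqP => E; move: a; rewrite E (chi0E chy).
  have up : u != p by apply/eqP => E; move: a; rewrite E (chi2E Hcp); neqs.
  have a' : (u, v) \in arcs N' by rewrite Ea a; neqs.
  have vN' : v \in nodes N' by case/andP: (HL.1 _ _ a').
  rewrite !to //; case: (H1 _ _ a') => le eq; split => // /eq.
  by case: (HS _ vN') => _ ->.
- move=> u iu.
  have [uN nlu] : u \in nodes N /\ ~~ is_leaf N u by case/andP: iu.
  case: (u =P x) => [E|/eqP ux]; first by rewrite E lx in nlu.
  case: (u =P y) => [E|/eqP uy]; first by rewrite E ly in nlu.
  case: (u =P p) => [->|/eqP up].
    exists y; rewrite (chi2E Hcp) eqxx orbT tp ty; split => //; lra.
  case: (u =P g) => [->|/eqP ug].
    exists p; rewrite (parE Hg) eqxx tp tg; split => //; lra.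
  have uN' : u \in nodes N' by rewrite En uN; neqs.
  have iu' : is_internal N' u by case: (HS _ uN') => _ _ -> _.
  case: (H2 _ iu') => v [a' lt]; move: a'; rewrite Ea; neqs; rewrite orbF.
  case/and5P => a _ vx _ vp.
  have vy : v != y by apply/eqP => E; move: a; rewrite E (parE Hpy); neqs.
  by exists v; rewrite !to.
- move=> r u v rr ar br uv.
  case: (nret _ rr) => rx ry rp.
  have rN' : r \in nodes N' by rewrite En; case/and3P: rr => -> _ _; neqs.
  have rr' : is_retic N' r by case: (HS _ rN') => _ -> _ _.
  have npar : forall w, (w, r) \in arcs N -> [/\ w != x, w != y & w != p].
    move=> w a; split; apply/eqP => E; move: a; rewrite E.
    + by rewrite (chi0E chx).
    + by rewrite (chi0E chy).
    + by rewrite (chi2E Hcp); neqs.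
  case: (npar _ ar) => ux uy up; case: (npar _ br) => vx vy vp.
  rewrite !to //; apply: H3 rr' _ _ uv; rewrite Ea; neqs; by rewrite ?ar ?br.
Qed.


Lemma lift_retic N x y (t' : T -> R) : LB N -> is_retic_cherry N x y ->
  HGT_consistent (reduce N (x, y)) t' -> exists t, HGT_consistent N t.
Proof.
move=> HLB Hrc; have := Hrc; case/and4P => lx ly _ _.
case: (retic_full HLB Hrc) => px [py [q [g [A B C D [En Ea HL HR HS]]]]].
case: (A) => Hpx Hpy Hcpx Hppx Hcpy; case: (B) => Hg chx chy qpy.
case: (C) => xy xN yN pxN pyN.
case: (D) => [[pxx pxy pyx pyy pxpy] [qpx qx qy gpy gpx] gx gy].
set N' := reduce N (x, y) in En Ea HL HR HS *.
case=> H1 H2 H3.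
pose m := Rmax (t' g) (t' q).
have mg : t' g <= m by apply: Rmax_l.
have mq : t' q <= m by apply: Rmax_r.
pose t z := if (z == px) || (z == py) then m + 1
            else if (z == x) || (z == y) then m + 2 else t' z.
have tpx : t px = m + 1 by rewrite /t eqxx.
have tpy : t py = m + 1 by rewrite /t eqxx orbT.
have tx : t x = m + 2 by rewrite /t eqxx orTb; neqs.
have ty : t y = m + 2 by rewrite /t eqxx orbT; neqs.
have to : forall z, z != px -> z != py -> z != x -> z != y -> t z = t' z.
  by move=> z zp zp' zx zy; rewrite /t; neqs.
have tg : t g = t' g by apply: to.
have tq : t q = t' q by apply: to.
have rpx : is_retic N px.
  by rewrite /is_retic pxN par_card chi_card Hppx Hcpx cards1 cards2; neqs.
have nret : forall z, is_retic N z -> [/\ z != x, z != y & z != py].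
  move=> z rz; split; apply/eqP => E; rewrite E in rz.
  - exact: retic_chi0 rz chx.
  - exact: retic_chi0 rz chy.
  - exact: retic_chi2 rz Hcpy pxy.
have Hleaf : forall u, is_internal N u -> u != x /\ u != y.
  move=> u /andP [_ nl]; split; apply/eqP => E; by rewrite E ?lx ?ly in nl.
exists t; split.
- move=> u v a.
  case: (v =P x) => [Ev|/eqP vx].
    subst v; move: a; rewrite (parE Hpx) => /eqP ->; rewrite tpx tx; split; lra.
  case: (v =P y) => [Ev|/eqP vy].
    subst v; move: a; rewrite (parE Hpy) => /eqP ->; rewrite tpy ty; split; lra.
  case: (v =P px) => [Ev|/eqP vpx].
    subst v; move: a; rewrite (par2E Hppx) => /orP [] /eqP ->.
      by rewrite tpy tpx; split => //; lra.
    rewrite tq tpx; split; lra.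
  case: (v =P py) => [Ev|/eqP vpy].
    subst v; move: a; rewrite (parE Hg) => /eqP ->; rewrite tpy tg; split; lra.
  have ux : u != x by apply/eqP => E; move: a; rewrite E (chi0E chx).
  have uy : u != y by apply/eqP => E; move: a; rewrite E (chi0E chy).
  have upx : u != px by apply/eqP => E; move: a; rewrite E (chiE Hcpx); neqs.
  have upy : u != py by apply/eqP => E; move: a; rewrite E (chi2E Hcpy); neqs.
  have a' : (u, v) \in arcs N' by rewrite Ea a; neqs.
  have vN' : v \in nodes N' by case/andP: (HL.1 _ _ a').
  rewrite !to //; case: (H1 _ _ a') => le eq; split => // /eq.
  by case: (HS _ vN') => _ ->.
- move=> u iu.
  have [uN nlu] : u \in nodes N /\ ~~ is_leaf N u by case/andP: iu.
  case: (Hleaf _ iu) => ux uy.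
  case: (u =P px) => [->|/eqP upx].
    exists x; rewrite (chiE Hcpx) eqxx tpx tx; split => //; lra.
  case: (u =P py) => [->|/eqP upy].
    exists y; rewrite (chi2E Hcpy) eqxx orbT tpy ty; split => //; lra.
  case: (u =P g) => [->|/eqP ug].
    exists py; rewrite (parE Hg) eqxx tpy tg; split => //; lra.
  case: (u =P q) => [->|/eqP uq].
    exists px; rewrite (par2E Hppx) eqxx orbT tpx tq; split => //; lra.
  have uN' : u \in nodes N' by rewrite En uN; neqs.
  have iu' : is_internal N' u by case: (HS _ uN') => _ _ -> _.
  case: (H2 _ iu') => v [a' lt]; move: a'; rewrite Ea; neqs; rewrite !orbF.
  case/and5P => a _ _ vpx vpy.
  have vx : v != x by apply/eqP => E; move: a; rewrite E (parE Hpx); neqs.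
  have vy : v != y by apply/eqP => E; move: a; rewrite E (parE Hpy); neqs.
  by exists v; rewrite !to.
- move=> r u v rr ar br uv.
  case: (nret _ rr) => rx ry rpy.
  case: (r =P px) => [Er|/eqP rpx'].
    subst r; move: ar br; rewrite !(par2E Hppx) => /orP [] /eqP Eu /orP [] /eqP Ev;
      subst u v => //; rewrite ?tpy ?tq ?tpx.
    + split => // _ E; have : t' q <= m by []. lra.
    + split => [E|]; [lra | by []].
  have rN' : r \in nodes N' by rewrite En; case/and3P: rr => -> _ _; neqs.
  have rr' : is_retic N' r by case: (HS _ rN') => _ -> _ _.
  have npar : forall w, (w, r) \in arcs N -> [/\ w != x, w != y, w != px & w != py].
    move=> w a; split; apply/eqP => E; move: a; rewrite E.
    + by rewrite (chi0E chx).
    + by rewrite (chi0E chy).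
    + by rewrite (chiE Hcpx); neqs.
    + by rewrite (chi2E Hcpy); neqs.
  case: (npar _ ar) => ux uy upx upy; case: (npar _ br) => vx vy vpx vpy.
  rewrite !to //; apply: H3 rr' _ _ uv; rewrite Ea; neqs; by rewrite ?ar ?br.
Qed.

End Lift.



Section Fwd.
Variable T : finType.
Implicit Types (N : digraph T) (u v w x y z : T).

Definition anc N z := [set w | connect (arel N) w z].

Lemma anc_lt N u v : (forall u v, (u, v) \in arcs N -> ~~ connect (arel N) v u) ->
  (u, v) \in arcs N -> #|anc N u| < #|anc N v|.
Proof.
move=> Hac a; apply: proper_card; rewrite properE; apply/andP; split.
  apply/subsetP => w; rewrite !inE => cw; apply: connect_trans cw _.
  by apply: connect1.
apply/subsetP => /(_ v); rewrite !inE connect0 => /(_ isT).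
by apply/negP; apply: Hac.
Qed.

Lemma binary_LB N : is_binary_network N -> LB N.
Proof.
case=> [[H1 _ _ H4] Hb]; split => // v vN.
case/or4P: (H4 _ vN).
- by case/and3P => _ -> ->.
- move=> tn; case/and3P: (tn) => _ i1 _; case: (Hb _ vN) => o2 _.
  by rewrite (o2 tn) i1 eqxx orbT.
- move=> rn; case/and3P: (rn) => _ _ o1; case: (Hb _ vN) => _ i2.
  by rewrite (i2 rn) o1 eqxx !orbT.
- by case/and3P => _ -> ->; rewrite !orbT.
Qed.

Lemma tree_HGT N : is_tree N -> exists t, HGT_consistent N t.
Proof.
case=> [[H1 H2 H3 H4] Hr].
exists (fun z => INR #|anc N z|); split.
- move=> u v a; have lt := anc_lt H2 a.
  have : Rlt (INR #|anc N u|) (INR #|anc N v|) by apply: lt_INR; apply/ltP.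
  by move=> h; split; [lra | move=> E; lra].
- move=> u /andP [uN nl].
  have : 0 < outdeg N u.
    case/or4P: (H4 _ uN); rewrite /is_root /is_tree_node /is_retic.
    + by case/and3P => _ _ /eqP ->.
    + by case/and3P => _ _ /(leq_trans _) ->.
    + by case/and3P => _ _ /eqP ->.
    + by move=> l; rewrite l in nl.
  rewrite chi_card => /card_gt0P [v]; rewrite inchi => a; exists v; split => //.
  have lt := anc_lt H2 a; apply: lt_INR; exact/ltP.
- by move=> r u v rr; move: (Hr r); rewrite rr.
Qed.

Lemma reduce_other N x y : ~~ is_cherry N x y -> ~~ is_retic_cherry N x y ->
  reduce N (x, y) = N.
Proof.
move=> nc nr; rewrite /reduce; case: (parent N x) => [px|] //; case: (parent N y) => [py|] //.
by rewrite (negbTE nc) (negbTE nr).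
Qed.

Lemma orchard_HGT_gen S : forall N, LB N -> is_tree (reduce_seq N S) ->
  exists t, HGT_consistent N t.
Proof.
elim: S => [|[x y] S IH] N HLB; first exact: tree_HGT.
move=> Ht; change (is_tree (reduce_seq (reduce N (x, y)) S)) in Ht.
case: (boolP (is_cherry N x y)) => Hc.
  case: (cherry_full HLB Hc) => p [g [_ _ _ _ [_ _ HL _ _]]].
  case: (IH _ HL Ht) => t' Ht'; exact: lift_cherry HLB Hc Ht'.
case: (boolP (is_retic_cherry N x y)) => Hrc.
  case: (retic_full HLB Hrc) => px [py [q [g [_ _ _ _ [_ _ HL _ _]]]]].
  case: (IH _ HL Ht) => t' Ht'; exact: lift_retic HLB Hrc Ht'.
by move: Ht; rewrite reduce_other //; apply: IH.
Qed.

End Fwd.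




Section Bwd.
Variable T : finType.
Implicit Types (N : digraph T) (u v w x y z : T).

Lemma exists_max_seq (f : T -> R) (s : seq T) a : a \in s ->
  exists m, m \in s /\ forall y, y \in s -> Rle (f y) (f m).
Proof.
elim: s a => [|b s IH] a //.
case: s IH => [|c s] IH.
  move=> _; exists b; split; first by rewrite inE.
  by move=> y; rewrite inE => /eqP ->; apply: Rle_refl.
move=> _; case: (IH c); first by rewrite inE eqxx.
move=> m [ms Hm]; case: (Rle_dec (f b) (f m)) => H.
  exists m; split; first by rewrite inE ms orbT.
  by move=> y; rewrite inE => /orP [/eqP ->|/Hm].
exists b; split; first by rewrite inE eqxx.
move=> y; rewrite inE => /orP [/eqP ->|/Hm]; first by apply: Rle_refl.
move=> h; lra.
Qed.

Lemma exists_max (f : T -> R) (A : {set T}) a : a \in A ->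
  exists m, m \in A /\ forall y, y \in A -> Rle (f y) (f m).
Proof.
rewrite -mem_enum => aA; case: (exists_max_seq f aA) => m [mA Hm].
by exists m; split; [rewrite -mem_enum | move=> y yA; apply: Hm; rewrite mem_enum].
Qed.

Lemma HGT_cherry N x y t : LB N -> HGT_consistent N t -> is_cherry N x y ->
  HGT_consistent (reduce N (x, y)) t.
Proof.
move=> HLB [H1 H2 H3] Hc; have := Hc; case/and4P => lx ly _ _.
case: (cherry_full HLB Hc) => p [g [[Hpx Hpy Hcp Hg] [chx chy] [[xy px py gp] gx gy]
   [xN yN pN] [En Ea HL HR HS]]].
set N' := reduce N (x, y) in En Ea HL HR HS *.
have gpa : (g, p) \in arcs N by rewrite (parE Hg).
have pya : (p, y) \in arcs N by rewrite (chi2E Hcp) eqxx orbT.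
have tgp : Rlt (t g) (t p).
  case: (H1 _ _ gpa) => le eq; case: (Rle_lt_or_eq_dec _ _ le) => // /eq.
  by move=> rp; exfalso; apply: (@retic_chi2 _ N p x y).
have tpy : Rlt (t p) (t y).
  case: (H1 _ _ pya) => le eq; case: (Rle_lt_or_eq_dec _ _ le) => // /eq.
  by move=> ry; exfalso; apply: (@retic_chi0 _ N y).
split.
- move=> u v; rewrite Ea; case/orP.
    case/and5P => a _ vx _ vp; case: (H1 _ _ a) => le eq; split => // /eq rv.
    have vN' : v \in nodes N' by rewrite En vx vp; case/and3P: rv => ->.
    by case: (HS _ vN') => _ -> _ _.
  case/andP => /eqP -> /eqP ->; split; first lra.
  by move=> E; lra.
- move=> u iu.
  have uN' : u \in nodes N' by case/andP: iu.
  have iuN : is_internal N u by case: (HS _ uN') => _ _ <- _.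
  move: uN'; rewrite En => /and3P [uN ux up].
  case: (H2 _ iuN) => v [a lt].
  case: (v =P p) => [Ev|/eqP vp].
    subst v; move: a; rewrite (parE Hg) => /eqP Eu; subst u.
    by exists y; rewrite Ea !eqxx orbT; split => //; lra.
  case: (v =P x) => [Ev|/eqP vx].
    by subst v; move: a; rewrite (parE Hpx); neqs.
  by exists v; rewrite Ea a; neqs.
- move=> r u v rr ar br uv.
  have rN' : r \in nodes N' by case/and3P: rr.
  have rrN : is_retic N r by case: (HS _ rN') => _ <- _ _.
  have ry : r != y by apply/eqP => E; subst r; apply: (@retic_chi0 _ N y).
  apply: H3 rrN _ _ uv.
  + by move: ar; rewrite Ea; neqs; rewrite andbF orbF => /and5P [].
  + by move: br; rewrite Ea; neqs; rewrite andbF orbF => /and5P [].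
Qed.


Lemma HGT_retic N x y t : LB N -> HGT_consistent N t -> is_retic_cherry N x y ->
  (forall w r, (w, y) \in arcs N -> (r, x) \in arcs N -> t w = t r) ->
  HGT_consistent (reduce N (x, y)) t.
Proof.
move=> HLB [H1 H2 H3] Hrc Ht; have := Hrc; case/and4P => lx ly _ _.
case: (retic_full HLB Hrc) => px [py [q [g [A B C D [En Ea HL HR HS]]]]].
case: (A) => Hpx Hpy Hcpx Hppx Hcpy; case: (B) => Hg chx chy qpy.
case: (C) => xy xN yN pxN pyN.
case: (D) => [[pxx pxy pyx pyy pxpy] [qpx qx qy gpy gpx] gx gy].
set N' := reduce N (x, y) in En Ea HL HR HS *.
have qpxa : (q, px) \in arcs N by rewrite (par2E Hppx) eqxx orbT.
have pypxa : (py, px) \in arcs N by rewrite (par2E Hppx) eqxx.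
have gpya : (g, py) \in arcs N by rewrite (parE Hg).
have pxxa : (px, x) \in arcs N by rewrite (chiE Hcpx).
have pyya : (py, y) \in arcs N by rewrite (chi2E Hcpy) eqxx orbT.
have rpx : is_retic N px.
  by rewrite /is_retic pxN par_card chi_card Hppx Hcpx cards1 cards2; neqs.
have e1 : t py = t px by apply: Ht.
have tqpx : Rlt (t q) (t px).
  case: (H1 _ _ qpxa) => le _; case: (Rle_lt_or_eq_dec _ _ le) => // E.
  have nq : py <> q by move=> E'; rewrite E' eqxx in qpy.
  have := H3 _ _ _ rpx pypxa qpxa nq.
  by case=> /(_ e1).
have tpxx : Rlt (t px) (t x).
  case: (H1 _ _ pxxa) => le eq; case: (Rle_lt_or_eq_dec _ _ le) => // /eq.
  by move=> rx; exfalso; apply: (@retic_chi0 _ N x).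
have tgpy : Rlt (t g) (t py).
  case: (H1 _ _ gpya) => le eq; case: (Rle_lt_or_eq_dec _ _ le) => // /eq.
  by move=> rp; exfalso; apply: (@retic_chi2 _ N py px y).
have tpyy : Rlt (t py) (t y).
  case: (H1 _ _ pyya) => le eq; case: (Rle_lt_or_eq_dec _ _ le) => // /eq.
  by move=> ry; exfalso; apply: (@retic_chi0 _ N y).
split.
- move=> u v; rewrite Ea; case/or3P.
  + case/and5P => a _ _ vpx vpy; case: (H1 _ _ a) => le eq; split => // /eq rv.
    have vN' : v \in nodes N' by rewrite En vpx vpy; case/and3P: rv => ->.
    by case: (HS _ vN') => _ -> _ _.
  + case/andP => /eqP -> /eqP ->; split; first lra.
    by move=> E; lra.
  + case/andP => /eqP -> /eqP ->; split; first lra.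
    by move=> E; lra.
- move=> u iu.
  have uN' : u \in nodes N' by case/andP: iu.
  have iuN : is_internal N u by case: (HS _ uN') => _ _ <- _.
  move: uN'; rewrite En => /and3P [uN upx upy].
  case: (H2 _ iuN) => v [a lt].
  case: (v =P px) => [Ev|/eqP vpx].
    subst v; move: a; rewrite (par2E Hppx); neqs => /eqP Eu; subst u.
    by exists x; rewrite Ea !eqxx orbT; split => //; lra.
  case: (v =P py) => [Ev|/eqP vpy].
    subst v; move: a; rewrite (parE Hg) => /eqP Eu; subst u.
    by exists y; rewrite Ea !eqxx !orbT; split => //; lra.
  by exists v; rewrite Ea a; neqs.
- move=> r u v rr ar br uv.
  have rN' : r \in nodes N' by case/and3P: rr.
  have rrN : is_retic N r by case: (HS _ rN') => _ <- _ _.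
  have ry : r != y by apply/eqP => E; subst r; apply: (@retic_chi0 _ N y).
  have rx : r != x by apply/eqP => E; subst r; apply: (@retic_chi0 _ N x).
  apply: H3 rrN _ _ uv.
  + by move: ar; rewrite Ea; neqs; rewrite !andbF !orbF => /and5P [].
  + by move: br; rewrite Ea; neqs; rewrite !andbF !orbF => /and5P [].
Qed.

End Bwd.



Section Fin.
Variable T : finType.
Implicit Types (N : digraph T) (u v w x y z : T).

Lemma path_le N (t : T -> R) :
  (forall u v, (u, v) \in arcs N -> Rle (t u) (t v)) ->
  forall a s, path (arel N) a s -> Rle (t a) (t (last a s)).
Proof.
move=> H1 a s; elim: s a => [|b s IH] a /=; first by move=> _; apply: Rle_refl.
case/andP => ab pb; apply: Rle_trans (IH _ pb); exact: H1.
Qed.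

Lemma retic_child N t r : HGT_consistent N t -> is_retic N r ->
  exists c, chi N r = [set c] /\ Rlt (t r) (t c).
Proof.
case=> H1 H2 H3 rr; have := rr; case/and3P => rN _ o1.
move: o1; rewrite chi_card => /cards1P [c Hc].
have ir : is_internal N r.
  by rewrite /is_internal rN /is_leaf; case/and3P: rr => _ _ /eqP ->; rewrite !andbF.
case: (H2 _ ir) => c' [a lt]; move: a; rewrite (chiE Hc) => /eqP Ec; subst c'.
by exists c.
Qed.

Lemma HGT_acyclic N t : HGT_consistent N t ->
  forall u v, (u, v) \in arcs N -> ~~ connect (arel N) v u.
Proof.
move=> HH; have := HH; case=> H1 H2 H3 u v a; apply/negP => /connectP [s ps Eu].
have le1 : Rle (t v) (t u) by rewrite Eu; apply: path_le ps => ? ? /H1 [].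
case: (H1 _ _ a) => le2 eq.
have E : t u = t v by lra.
have rv := eq E.
case: (retic_child HH rv) => c [Hc lt].
case: s ps Eu => [|b s] /=.
  move=> _ Euv; subst u; move: a; rewrite (chiE Hc) => /eqP Ec; rewrite -Ec in lt; lra.
case/andP => vb pb Eu'.
move: vb; rewrite /arel (chiE Hc) => /eqP Eb; subst b.
have : Rle (t c) (t (last c s)) by apply: path_le pb => ? ? /H1 [].
rewrite -Eu'; lra.
Qed.


Lemma final N t rho : LB N -> HGT_consistent N t -> #|[set v | is_root N v]| = 1 ->
  is_root N rho -> (forall u, is_internal N u -> Rle (t u) (t rho)) ->
  is_tree N /\ nb_leaves N = 1.
Proof.
move=> HLB HH Hr1 rr Hmax; have := HH; case=> H1 H2 H3.
have Hac := HGT_acyclic HH.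
have := rr; case/and3P => rN i0 o1.
move: (o1); rewrite chi_card => /cards1P [c Hc].
have ir : is_internal N rho.
  by rewrite /is_internal rN /is_leaf (eqP i0) andbF.
case: (H2 _ ir) => c' [a lt]; move: a; rewrite (chiE Hc) => /eqP Ec; subst c'.
have rca : (rho, c) \in arcs N by rewrite (chiE Hc).
have cN : c \in nodes N by case/andP: (HLB.1 _ _ rca).
have lc : is_leaf N c.
  apply/negPn/negP => nl; have ic : is_internal N c by rewrite /is_internal cN nl.
  move: (Hmax _ ic) => h; lra.
have chc : chi N c = set0 by case: (leafE lc).
have runiq : forall z, is_root N z -> z = rho.
  move: Hr1 => /eqP /cards1P [r0 E] z rz.
  have : z \in [set v | is_root N v] by rewrite inE.
  have : rho \in [set v | is_root N v] by rewrite inE.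
  by rewrite E !inE => /eqP -> /eqP ->.
have rc : rho != c by apply/eqP => E; move: rca; rewrite E (chi0E chc).
have Hnodes : forall z, z \in nodes N -> (z == rho) || (z == c).
  move=> z0 z0N; apply/negPn/negP => Hz0.
  pose P := fun z => [&& z \in nodes N, z != rho & z != c].
  have Pz0 : P z0 by rewrite /P z0N; move: Hz0; rewrite negb_or.
  case: (arg_minnP (fun z => #|anc N z|) Pz0) => z Pz Hmin.
  case/and3P: Pz => zN zr zc.
  have nrz : ~~ is_root N z by apply/negP => /runiq E; rewrite E eqxx in zr.
  have : 0 < indeg N z.
    case: HLB => _ /(_ _ zN); move: nrz; rewrite /is_root zN /=.
    by case: (indeg N z) => [|n] //= /negbTE ->.
  rewrite par_card => /card_gt0P [p]; rewrite inpar => pa.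
  have pN : p \in nodes N by case/andP: (HLB.1 _ _ pa).
  have pc : p != c by apply/eqP => E; move: pa; rewrite E (chi0E chc).
  have pr : p != rho.
    by apply/eqP => E; move: pa; rewrite E (chiE Hc) => E'; rewrite E' in zc.
  have Pp : P p by rewrite /P pN pc pr.
  by move: (anc_lt Hac pa); rewrite ltnNge (Hmin _ Pp).
have nret : forall v, ~~ is_retic N v.
  move=> v; apply/negP => rv; have := rv; case/and3P => vN i2 o1'.
  case/orP: (Hnodes _ vN) => /eqP E; subst v.
    by rewrite (eqP i0) in i2.
  by rewrite chi_card chc cards0 in o1'.
split; last first.
  rewrite /nb_leaves; apply/eqP/cards1P; exists c; apply/setP => v; rewrite !inE.
  apply/idP/idP => [lv|/eqP -> //].
  case/and3P: (lv) => vN i1 _; case/orP: (Hnodes _ vN) => // /eqP E; subst v.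
  by rewrite (eqP i0) in i1.
split => //; split => // [u v /HLB.1 //|v vN].
case/orP: (Hnodes _ vN) => /eqP ->; by rewrite ?rr ?lc ?orbT.
Qed.

End Fin.



Section Main.
Variable T : finType.
Implicit Types (N : digraph T) (u v w x y z : T).

Lemma nodes_lt N N' a : (forall z, z \in nodes N' -> z \in nodes N) ->
  a \in nodes N -> a \notin nodes N' -> #|nodes N'| < #|nodes N|.
Proof.
move=> sub aN aN'; apply: proper_card; rewrite properE; apply/andP; split.
  by apply/subsetP => z /sub.
by apply/subsetP => /(_ a aN); apply/negP.
Qed.

Lemma eq_parent_tree N t w u : LB N -> HGT_consistent N t -> (w, u) \in arcs N ->
  t w = t u -> indeg N w = 1 /\ outdeg N w = 2.
Proof.
move=> HLB [H1 H2 H3] a E.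
have wN : w \in nodes N by case/andP: (HLB.1 _ _ a).
have o1 : 0 < outdeg N w by rewrite chi_card; apply/card_gt0P; exists u; rewrite inchi.
have iw : is_internal N w.
  rewrite /is_internal wN /is_leaf; apply/negP => /and3P [_ _ /eqP o0].
  by rewrite o0 in o1.
case: (H2 _ iw) => v [b lt].
have no1 : outdeg N w != 1.
  apply/negP; rewrite chi_card => /cards1P [c Hc].
  move: a b; rewrite !(chiE Hc) => /eqP Eu /eqP Ev; subst u v; lra.
case: HLB => _ /(_ _ wN); case/or4P => /andP [/eqP -> /eqP Eo]; rewrite Eo // in no1 o1 *.
Qed.

Lemma HGT_orchard n : forall N t, #|nodes N| < n -> LB N -> HGT_consistent N t ->
  #|[set v | is_root N v]| = 1 -> orchard N.
Proof.
elim: n => [//|n IH] N t Hn HLB HH Hr1.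
have := HH; case=> H1 H2 H3.
move: (Hr1) => /eqP /cards1P [rho Er].
have rr : is_root N rho by move: Er => /setP /(_ rho); rewrite !inE eqxx.
have := rr; case/and3P => rN i0 o1.
have ir : is_internal N rho by rewrite /is_internal rN /is_leaf (eqP i0) andbF.
case: (@exists_max _ t [set u | is_internal N u] rho); first by rewrite inE.
move=> m [mi Hm]; rewrite inE in mi.
have Hm' : forall u, is_internal N u -> Rle (t u) (t m) by move=> u iu; apply: Hm; rewrite inE.
case: (classic (exists u, [/\ is_internal N u, ~~ is_root N u & t u = t m])); last first.
  move=> nex; have rm : is_root N m.
    by apply/negPn/negP => nr; apply: nex; exists m.
  case: (final HLB HH Hr1 rm Hm') => Ht Hl.
  by exists [::].
case=> u [iu nru tu].
have intleaf : forall z, z \in nodes N -> Rlt (t m) (t z) -> is_leaf N z.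
  move=> z zN lt; apply/negPn/negP => nl.
  have iz : is_internal N z by rewrite /is_internal zN nl.
  move: (Hm' _ iz) => h; lra.
have [w [wi iw1 ow2 tw]] : exists w, [/\ is_internal N w, indeg N w = 1, outdeg N w = 2 & t w = t m].
  have uN : u \in nodes N by case/andP: iu.
  case: HLB => HL1 HL2.
  case/or4P: (HL2 _ uN) => /andP [/eqP iu' /eqP ou'].
  - by move: nru; rewrite /is_root uN iu' ou'.
  - by exists u.
  - have ru : is_retic N u by rewrite /is_retic uN iu' ou'.
    move: (iu'); rewrite par_card => /eqP /cards2P [p1 [p2 [p12 Ep]]].
    have a1 : (p1, u) \in arcs N by rewrite (par2E Ep) eqxx.
    have a2 : (p2, u) \in arcs N by rewrite (par2E Ep) eqxx orbT.
    have np : p1 <> p2 by move=> E; rewrite E eqxx in p12.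
    have [p [ap tp]] : exists p, (p, u) \in arcs N /\ t p = t u.
      case: (classic (t p1 = t u)) => h; first by exists p1.
      exists p2; split => //; case: (H3 _ _ _ ru a1 a2 np) => _ h2.
      by apply: NNPP => h3; apply: h; apply: h2.
    case: (eq_parent_tree (conj HL1 HL2) HH ap tp) => i1 o2.
    exists p; split => //; last by rewrite tp.
    have pN : p \in nodes N by case/andP: (HL1 _ _ ap).
    by rewrite /is_internal pN /is_leaf o2 /= !andbF.
  - by move: iu; rewrite /is_internal /is_leaf uN iu' ou' eqxx.
have wN : w \in nodes N by case/andP: wi.
case: (H2 _ wi) => y [wy lty].
have yN : y \in nodes N by case/andP: (HLB.1 _ _ wy).
have ly : is_leaf N y by apply: intleaf => //; rewrite -tw.
have [c [cy Ec]] : exists c, c != y /\ chi N w = [set c; y].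
  move: (ow2); rewrite chi_card => /eqP /cards2P [c1 [c2 [c12 Ec]]].
  move: (wy); rewrite (chi2E Ec) => /orP [] /eqP Ey; subst y.
    by exists c2; split; [rewrite eq_sym | rewrite setUC].
  by exists c1.
have wc : (w, c) \in arcs N by rewrite (chi2E Ec) eqxx.
have cN : c \in nodes N by case/andP: (HLB.1 _ _ wc).
case: (boolP (is_leaf N c)) => lc.
  have Hc : is_cherry N c y.
    by rewrite /is_cherry lc ly cy /=; apply/existsP; exists w; rewrite wc wy.
  case: (cherry_full HLB Hc) => p [g [[Hpx Hpy Hcp Hg] _ _ _ [En Ea HL HR HS]]].
  have Hn' : #|nodes (reduce N (c, y))| < n.
    have : #|nodes (reduce N (c, y))| < #|nodes N|.
      apply: (@nodes_lt _ _ c) => //.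
        by move=> z; rewrite En => /and3P [].
      by rewrite En eqxx andbF.
    by move=> h; apply: leq_trans h _.
  case: (IH _ t Hn' HL (HGT_cherry HLB HH Hc)); first by rewrite HR.
  by move=> S' HS'; exists ((c, y) :: S').
have ic : is_internal N c by rewrite /is_internal cN lc.
case: (H1 _ _ wc) => lec eqc.
have tc : t w = t c by move: (Hm' _ ic) => h; lra.
have rc := eqc tc.
case: (retic_child HH rc) => x [Hcx ltx].
have cx : (c, x) \in arcs N by rewrite (chiE Hcx).
have xN : x \in nodes N by case/andP: (HLB.1 _ _ cx).
have lx : is_leaf N x by apply: intleaf => //; rewrite -tw tc.
have Hpy : par N y = [set w] by case: (leafE ly) => _ cy1 _; apply: set1_of_card1 cy1 _; rewrite inpar.
have Hpx : par N x = [set c] by case: (leafE lx) => _ cx1 _; apply: set1_of_card1 cx1 _; rewrite inpar.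
have xy : x != y.
  apply/eqP => E; subst x.
  have : c \in par N y by rewrite inpar.
  rewrite Hpy inE => /eqP E; subst c.
  by case/and3P: rc => _ _ /eqP; rewrite ow2.
have Hrc : is_retic_cherry N x y.
  rewrite /is_retic_cherry lx ly xy /=; apply/existsP; exists c; rewrite cx rc /=.
  by apply/existsP; exists w; rewrite wc wy.
have Ht : forall w' r, (w', y) \in arcs N -> (r, x) \in arcs N -> t w' = t r.
  by move=> w' r; rewrite (parE Hpy) (parE Hpx) => /eqP -> /eqP ->.
case: (retic_full HLB Hrc) => px [py [q [g [[Hpx' _ _ _ _] _ [_ _ _ pxN _] _ [En Ea HL HR HS]]]]].
have Hn' : #|nodes (reduce N (x, y))| < n.
  have : #|nodes (reduce N (x, y))| < #|nodes N|.
    apply: (@nodes_lt _ _ px) => //.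
      by move=> z; rewrite En => /and3P [].
    by rewrite En eqxx andbF.
  by move=> h; apply: leq_trans h _.
case: (IH _ t Hn' HL (HGT_retic HLB HH Hrc Ht)); first by rewrite HR.
by move=> S' HS'; exists ((x, y) :: S').
Qed.

End Main.

Theorem mainTheorem5 (T : finType) (N : digraph T) :
  is_binary_network N ->
  (orchard N <-> exists t : T -> R, HGT_consistent N t).
Proof.
move=> Hb; have HLB := binary_LB Hb; split.
  by case=> S [Ht _]; apply: orchard_HGT_gen Ht.
case=> t Ht; apply: (@HGT_orchard _ (#|nodes N|).+1 N t) => //.
by case: Hb => [[_ _ H _] _].
Qed.
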